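(* Consider problem (P): minimize $F(\mathbf{x})=\mathbf{A}\otimes\mathbf{x}$ over $\mathbf{x}\in\mathcal{X}$, under the standing assumptions stated in the context. If (P) is solvable, then: (i) every entry $b_i$ ($i=1,\dots,m$) of the vector $\mathbf{b}$ defined in the context is a real number (i.e. $b_i\neq-\infty$); (ii) every entry $x^*_j(\mathbf{A},\mathbf{b})$ ($j=1,\dots,n$) of the vector $\mathbf{x}^*(\mathbf{A},\mathbf{b})$ defined in the context is a real number (i.e. neither $-\infty$ nor $+\infty$).
   Context: Max-plus algebra: $\mathbb{R}_{\max}=\mathbb{R}\cup\{-\infty\}$ with $a\oplus b=\max\{a,b\}$ and $a\otimes b=a+b$; $\varepsilon=-\infty$. For $\mathbf{A}=(a_{ij})\in\mathbb{R}_{\max}^{m\times n}$ and $\mathbf{x}=(x_j)\in\mathbb{R}^n$, $\mathbf{A}\otimes\mathbf{x}$ is the vector with $i$th component $F_i(\mathbf{x})=\max_{1\le j\le n}(a_{ij}+x_j)$, with $r+(-\infty)=-\infty$. Vectors are compared componentwise. Problem (P): given $\mathbf{A}=(a_{ij})\in\mathbb{R}_{\max}^{m\times n}$, reals $k_1,\dots,k_n\ge 0$ not all zero, and $c\in\mathbb{R}$, let $\mathcal{X}=\{\mathbf{x}\in\mathbb{R}^n : \sum_{j=1}^n k_jx_j=c\}$ and $F(\mathbf{x})=\mathbf{A}\otimes\mathbf{x}$. A point $\tilde{\mathbf{x}}\in\mathcal{X}$ is a globally optimal solution of (P) if $F(\mathbf{x})\ge F(\tilde{\mathbf{x}})$ componentwise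 for every $\mathbf{x}\in\mathcal{X}$; (P) is solvable if a globally optimal solution exists. Standing assumptions: (1) no row of $\mathbf{A}$ consists entirely of $-\infty$ entries; (2) if the $j$th column of $\mathbf{A}$ consists entirely of $-\infty$ entries, then $k_j>0$. Let $\mathcal{J}=\{j : k_j>0\}$. Define $\mathbf{b}=(b_i)$ by $b_i=-\infty$ if $a_{ij}=-\infty$ for some $j\in\mathcal{J}$, and otherwise $b_i=\frac{\sum_{j\in\mathcal{J}}k_ja_{ij}+c}{\sum_{j\in\mathcal{J}}k_j}$. Define $\mathbf{x}^*(\mathbf{A},\mathbf{b})=(x^*_j(\mathbf{A},\mathbf{b}))$ by $x^*_j(\mathbf{A},\mathbf{b})=\min_{1\le i\le m}(b_i-a_{ij})$, with the conventions, for $r\in\mathbb{R}$: $r-(-\infty)=+\infty$, $(-\infty)-r=-\infty$, $(-\infty)-(-\infty)=+\infty$; thus $x^*_j(\mathbf{A},\mathbf{b})\in\mathbb{R}\cup\{-\infty,+\infty\}$. *)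

(* Defs.v *)
(* Max-plus algebra R_max = R ∪ {-oo}, represented as
   [option R] with [None] standing for epsilon = -oo. *)
From mathcomp Require Import all_boot all_order all_algebra.
Set Implicit Arguments. Unset Strict Implicit. Unset Printing Implicit Defensive.
Import Order.TTheory GRing.Theory Num.Theory.
Local Open Scope ring_scope.

Section MaxPlus.
Variable R : realFieldType.

Definition rmax := option R.

Definition rmax_add (a b : rmax) : rmax :=
  match a, b with
  | None, _ => b
  | _, None => a
  | Some x, Some y => Some (Num.max x y)
  end.

Definition rmax_mulr (a : rmax) (r : R) : rmax :=
  match a with None => None | Some x => Some (x + r) end.

Definition rmax_le (a b : rmax) : Prop :=
  match a, b with
  | None, _ => True
  | Some _, None => False
  | Some x, Some y => x <= y
  end.

Definition mp_apply m n (A : 'I_m -> 'I_n -> rmax) (x : 'I_n -> R) (i : 'I_m)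
  : rmax := \big[rmax_add/None]_(j < n) rmax_mulr (A i j) (x j).

Definition feasible n (k : 'I_n -> R) (c : R) (x : 'I_n -> R) : Prop :=
  \sum_(j < n) k j * x j = c.

Definition glob_opt m n (A : 'I_m -> 'I_n -> rmax) (k : 'I_n -> R) (c : R)
  (xt : 'I_n -> R) : Prop :=
  feasible k c xt /\
  forall x, feasible k c x -> forall i, rmax_le (mp_apply A xt i) (mp_apply A x i).

Definition solvable m n (A : 'I_m -> 'I_n -> rmax) (k : 'I_n -> R) (c : R) : Prop :=
  exists xt, glob_opt A k c xt.

Definition bvec m n (A : 'I_m -> 'I_n -> rmax) (k : 'I_n -> R) (c : R)
  (i : 'I_m) : rmax :=
  if [exists j : 'I_n, (0 < k j) && (A i j == None)] then None
  else Some ((\sum_(j < n | 0 < k j) k j * odflt 0 (A i j) + c)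
             / \sum_(j < n | 0 < k j) k j).

Inductive xval := XNinf | XFin of R | XPinf.

Definition rmax_sub (b a : rmax) : xval :=
  match b, a with
  | Some r, Some s => XFin (r - s)
  | Some _, None => XPinf
  | None, Some _ => XNinf
  | None, None => XPinf
  end.

Definition xval_min (u v : xval) : xval :=
  match u, v with
  | XNinf, _ => XNinf
  | _, XNinf => XNinf
  | XPinf, _ => v
  | _, XPinf => u
  | XFin r, XFin s => XFin (Num.min r s)
  end.

Definition xstar m n (A : 'I_m -> 'I_n -> rmax) (b : 'I_m -> rmax) (j : 'I_n)
  : xval := \big[xval_min/XPinf]_(i < m) rmax_sub (b i) (A i j).

End MaxPlus.

(* Main.v *)
Require Import Defs.
From mathcomp Require Import all_boot all_order all_algebra.
Import Order.TTheory GRing.Theory Num.Theory.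
Local Open Scope ring_scope.

Section Aux.
Variable R : realFieldType.

Lemma max_shift (a b d : R) : Num.max (a + d) (b + d) = Num.max a b + d.
Proof. by rewrite !maxEle lerD2r; case: ifP. Qed.

Lemma big_rmax_none (I : eqType) (r : seq I) (F : I -> rmax R) :
  \big[@rmax_add R/None]_(i <- r) F i = None -> forall i, i \in r -> F i = None.
Proof.
elim: r => [|a r IH] //; rewrite big_cons => H i; rewrite in_cons.
have [H1 H2] : F a = None /\ \big[@rmax_add R/None]_(j <- r) F j = None.
  move: H; case: (F a) => [x|]; case: (\big[_/_]_(j <- r) F j) => [y|] //.
by case/orP=> [/eqP ->|]; [|apply: IH].
Qed.

Lemma big_xmin_pinf (I : eqType) (r : seq I) (F : I -> xval R) :
  \big[@xval_min R/XPinf R]_(i <- r) F i = XPinf R -> forall i, i \in r -> F i = XPinf R.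
Proof.
elim: r => [|a r IH] //; rewrite big_cons => H i; rewrite in_cons.
have [H1 H2] : F a = XPinf R /\ \big[@xval_min R/XPinf R]_(j <- r) F j = XPinf R.
  move: H; case: (F a) => [|x|]; case: (\big[_/_]_(j <- r) F j) => [|y|] //.
by case/orP=> [/eqP ->|]; [|apply: IH].
Qed.

Lemma big_xmin_ninf (I : eqType) (r : seq I) (F : I -> xval R) :
  (forall i, F i <> XNinf R) -> \big[@xval_min R/XPinf R]_(i <- r) F i <> XNinf R.
Proof.
move=> HF; elim: r => [|a r IH]; first by rewrite big_nil.
rewrite big_cons.
move: (HF a) IH; case: (F a) => [|x|]; case: (\big[_/_]_(j <- r) F j) => [|y|] //.
Qed.

Lemma shift_add (u v : rmax R) d :
  rmax_mulr (rmax_add u v) d = rmax_add (rmax_mulr u d) (rmax_mulr v d).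
Proof. by case: u; case: v => //= x y; rewrite max_shift. Qed.

Lemma keyL m n (A : 'I_m -> 'I_n -> rmax R) (k : 'I_n -> R) (c : R)
  (Hrow : forall i, exists j, A i j != None)
  (Hsolv : solvable A k c) i j0 : 0 < k j0 -> A i j0 = None -> False.
Proof.
move=> Hk HA; case: Hsolv => xt [Hf Hopt].
pose S := \sum_(j < n | j != j0) k j.
pose x := fun l : 'I_n => if l == j0 then xt j0 + S / k j0 else xt l - 1.
have Fx : feasible k c x.
  rewrite /feasible (bigD1 j0) //= /x eqxx.
  rewrite (eq_bigr (fun l => k l * xt l - k l)); last first.
    by move=> l /negbTE ->; rewrite mulrBr mulr1.
  rewrite sumrB -/S -Hf /feasible [RHS](bigD1 j0) //=.
  rewrite mulrDr mulrCA divff ?mulr1; last by rewrite gt_eqF.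
  by rewrite addrACA subrr addr0.
have Hsh : mp_apply A x i = rmax_mulr (mp_apply A xt i) (-1).
  rewrite /mp_apply (big_morph (fun u => rmax_mulr u (-1)) (fun u v => shift_add u v (-1)) erefl).
  apply: eq_bigr => j _; rewrite /x; case: eqP => [->|_]; first by rewrite HA.
  by case: (A i j) => //= a; rewrite addrA.
have := Hopt x Fx i; rewrite Hsh.
case E: (mp_apply A xt i) => [v|] /=.
  by rewrite -subr_ge0 addrAC subrr add0r oppr_ge0 ler10.
case: (Hrow i) => j1; have := big_rmax_none _ _ _ E j1 (mem_index_enum j1) => /=.
by case: (A i j1).
Qed.

End Aux.

Theorem lemma2 (R : realFieldType) (m n : nat) (A : 'I_m -> 'I_n -> rmax R)
  (k : 'I_n -> R) (c : R)
  (Hm : (0 < m)%N)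
  (Hk0 : forall j, 0 <= k j)
  (Hknz : exists j, k j != 0)
  (Hrow : forall i, exists j, A i j != None)
  (Hcol : forall j, (forall i, A i j = None) -> 0 < k j)
  (Hsolv : solvable A k c) :
  (forall i, exists r : R, bvec A k c i = Some r) /\
  (forall j, exists r : R, xstar A (bvec A k c) j = XFin r).
Proof.
have Hb : forall i, exists r : R, bvec A k c i = Some r.
  move=> i; rewrite /bvec; case: existsP => [[j /andP[Hk /eqP HA]]|_].
    by case: (@keyL R m n A k c Hrow Hsolv i j Hk HA).
  by eexists.
split => // j.
have Hn : xstar A (bvec A k c) j <> XNinf R.
  apply: big_xmin_ninf => i; case: (Hb i) => r ->; by case: (A i j).
have Hp : xstar A (bvec A k c) j <> XPinf R.
  move=> E.
  have [i0 Hi0] : exists i, A i j != None.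
    apply/existsP; apply: contraT; rewrite negb_exists => /forallP H.
    have H' : forall i, A i j = None by move=> i; move: (H i); rewrite negbK => /eqP.
    have [i1 _] : exists i : 'I_m, True by exists (Ordinal Hm).
    by case: (@keyL R m n A k c Hrow Hsolv i1 j (Hcol j H') (H' i1)).
  have := big_xmin_pinf _ _ _ _ E i0 (mem_index_enum i0).
  case: (Hb i0) => r ->; move: Hi0; by case: (A i0 j).
move: Hn Hp; case: (xstar A (bvec A k c) j) => // r _ _; by exists r.
Qed.
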